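(* For any integers $k,l\geq 1$, the subsets $C_{k,l}$ and $\Phi_{k,l}C_{l,k}=\{\Phi_{k,l}\circ\tau\mid\tau\in C_{l,k}\}$ of $S_{k+l}$ are disjoint.
   Context: $S_m$ is the symmetric group on $\{1,\dots,m\}$ with product given by composition. An $(s,t)$-shuffle is a pair $(\alpha,\beta)$ of strictly increasing maps $\alpha:\{1,\dots,s\}\to\{1,\dots,s+t\}$, $\beta:\{1,\dots,t\}\to\{1,\dots,s+t\}$ with disjoint images; ${\sf Sh}^1(s,t)$ is the set of those with $\alpha(1)=1$. For $p,q\geq1$, $0\leq i\leq q-1$ and $(\alpha,\beta)\in{\sf Sh}^1(q-i,i)$, let $\tilde\sigma_{\alpha,\beta,p,q}\in S_{p+q}$ be given by $\tilde\sigma(j)=j$ for $1\leq j\leq p$, $\tilde\sigma(p+j)=p+\beta(i+1-j)$ for $1\leq j\leq i$, $\tilde\sigma(p+i+j)=p+\alpha(j)$ for $1\leq j\leq q-i$; let $\sigma_{\alpha,\beta,p,q}=\tilde\sigma_{\alpha,\beta,p,q}\circ(1,2)^i$ where $(1,2)$ is the transposition. Set $C_{p,q}=\{\sigma_{\alpha,\beta,p,q}\mid 0\leq i\leq q-1,\ (\alpha,\beta)\in{\sf Sh}^1(q-i,i)\}\subseteq S_{p+q}$. $\Phi_{k,l}\in S_{k+l}$ is defined by $\Phi_{k,l}(i)=i+k$ if $i\leq l$ and $\Phi_{k,l}(i)=i-l$ if $i>l$. *)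

(* Defs.v *)
(* Permutations in S_m are elements of 'S_m = {perm 'I_m};
   the paper's 1-indexed points {1,..,m} correspond to ordinals via j <-> j-1. *)
From mathcomp Require Import all_boot all_order all_fingroup.
Unset Printing Implicit Defensive.

(* 1-indexed view of a permutation s : 'S_m as a map on {1..m} (identity outside). *)
Definition ext1 {m : nat} (s : 'S_m) (j : nat) : nat :=
  if 0 < j then
    match @insub nat (fun x => x < m) 'I_m j.-1 with
    | Some x => (s x).+1
    | None => j
    end
  else j.

Definition is_shuffle (s t : nat) (alpha beta : nat -> nat) : Prop :=
  [/\ (forall j j', 1 <= j -> j < j' -> j' <= s -> alpha j < alpha j'),
      (forall j j', 1 <= j -> j < j' -> j' <= t -> beta j < beta j'),
      (forall j, 1 <= j <= s -> 1 <= alpha j <= s + t),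
      (forall j, 1 <= j <= t -> 1 <= beta j <= s + t) &
      (forall j j', 1 <= j <= s -> 1 <= j' <= t -> alpha j <> beta j')].

Definition in_Sh1 (s t : nat) (alpha beta : nat -> nat) : Prop :=
  is_shuffle s t alpha beta /\ alpha 1 = 1.

Definition tsigma (p q i : nat) (alpha beta : nat -> nat) (j : nat) : nat :=
  if j <= p then j
  else if j <= p + i then p + beta (i + 1 - (j - p))
  else p + alpha (j - p - i).

Definition tr12 (j : nat) : nat :=
  if j == 1 then 2 else if j == 2 then 1 else j.

Definition sigma_fun (p q i : nat) (alpha beta : nat -> nat) (j : nat) : nat :=
  tsigma p q i alpha beta (iter i tr12 j).

Definition inC (p q : nat) (s : 'S_(p + q)) : Prop :=
  exists i alpha beta,
    i <= q - 1 /\ in_Sh1 (q - i) i alpha beta /\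
    (forall j, 1 <= j <= p + q -> ext1 s j = sigma_fun p q i alpha beta j).

Definition Phi_fun (k l : nat) (i : nat) : nat :=
  if i <= l then i + k else i - l.

Definition inPhiC (k l : nat) (s : 'S_(k + l)) : Prop :=
  exists tau : 'S_(l + k), inC l k tau /\
    (forall j, 1 <= j <= k + l -> ext1 s j = Phi_fun k l (ext1 tau j)).

(* Main.v *)
Require Import Defs.
From mathcomp Require Import all_boot all_order all_fingroup.
From mathcomp Require Import zify.

Lemma iter_tr12 i : iter i tr12 1 = if odd i then 2 else 1.
Proof. elim: i => [//|i IH]; rewrite iterS IH /=; by case: (odd i). Qed.

Lemma sig1_i0 p q a b : 1 <= p -> sigma_fun p q 0 a b 1 = 1.
Proof. by move=> hp; rewrite /sigma_fun /= /tsigma hp. Qed.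

Lemma sig1_p2 p q i a b : 2 <= p -> 1 <= sigma_fun p q i a b 1 <= 2.
Proof.
move=> hp; rewrite /sigma_fun iter_tr12 /tsigma.
case: (odd i).
- by have -> : 2 <= p by [].
- by have -> : 1 <= p by lia.
Qed.

Lemma sig1_p1 q i a b : i <= q - 1 -> in_Sh1 (q - i) i a b ->
  sigma_fun 1 q i a b 1 <> 2.
Proof.
move=> hi [[_ _ _ hb hd] ha1]; rewrite /sigma_fun iter_tr12 /tsigma.
case ho: (odd i) => //=.
have i1 : 1 <= i by move: ho; case: (i).
have -> : (2 <= 1 + i) = true by lia.
have hbi := hb i (ltac:(lia)).
have hne := hd 1 i (ltac:(lia)) (ltac:(lia)).
rewrite ha1 in hne.
have -> : i + 1 - (2 - 1) = i by lia.
move=> h; apply: hne; lia.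
Qed.

Theorem lemma4 (k l : nat) : 1 <= k -> 1 <= l ->
  forall s : 'S_(k + l), ~ (inC k l s /\ inPhiC k l s).
Proof.
move=> hk hl s [[i [a [b [hi [hsh hs]]]]] [tau [[i' [a' [b' [hi' [hsh' ht]]]]] hp]]].
have e1 := hs 1 (ltac:(lia)).
have e2 := hp 1 (ltac:(lia)).
have e3 := ht 1 (ltac:(lia)).
rewrite e1 e3 in e2.
have [k1|k2] : k = 1 \/ 2 <= k by lia.
- subst k.
  have i'0 : i' = 0 by lia.
  subst i'. rewrite sig1_i0 // /Phi_fun in e2.
  move: e2; rewrite hl /= => e2.
  by apply: (sig1_p1 _ _ _ _ hi hsh).
- have [l1|l2] : l = 1 \/ 2 <= l by lia.
  + subst l.
    have i0 : i = 0 by lia. subst i.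
    rewrite sig1_i0 ?(ltnW k2) // /Phi_fun in e2.
    have hn := sig1_p1 _ _ _ _ hi' hsh'.
    move: e2; case: ifP => H; lia.
  + have := sig1_p2 k l i a b k2.
    have := sig1_p2 l k i' a' b' l2.
    move: e2; rewrite /Phi_fun.
    case: ifP => H; lia.
Qed.
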